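(* Let $\ell_1,\ell_2$ be two perpendicular lines in the hyperbolic plane crossing at a point $x$, dividing the plane into four quadrants. Then for every point $p$ in one quadrant and every point $q$ in the opposite quadrant, the hyperbolic geodesic segment from $p$ to $q$ passes within hyperbolic distance $\ln(1+\sqrt{2})$ of $x$.
   Context: The hyperbolic plane is the complete simply connected Riemannian surface of constant curvature $-1$; lines are complete geodesics. Two quadrants are opposite if they share only the point $x$. *)

(* Defs.v *)
(* Hyperboloid model of the hyperbolic plane. *)
From HB Require Import structures.
From mathcomp Require Import all_boot all_order all_algebra.
From mathcomp Require Import all_classical all_reals all_analysis.
Set Implicit Arguments. Unset Strict Implicit. Unset Printing Implicit Defensive.
Import Order.TTheory GRing.Theory Num.Theory.
Local Open Scope ring_scope.

Definition mpt (R : realType) := (R * R * R)%type.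

Definition mink (R : realType) (u v : mpt R) : R :=
  u.1.1 * v.1.1 + u.1.2 * v.1.2 - u.2 * v.2.

Definition onH (R : realType) (p : mpt R) : Prop :=
  mink p p = -1 /\ 0 < p.2.

(* Hyperbolic distance: cosh d(p,q) = -<p,q>, i.e. d = arcosh(-<p,q>). *)
Definition arcosh (R : realType) (t : R) : R := ln (t + Num.sqrt (t ^+ 2 - 1)).
Definition hdist (R : realType) (p q : mpt R) : R := arcosh (- mink p q).

(* Lines: the hyperbolic line with (spacelike unit) normal n is
   { p in H | <n,p> = 0 }.  It bounds the two closed half-planes
   { <n,p> >= 0 } and { <n,p> <= 0 }. *)
Definition unit_normal (R : realType) (n : mpt R) : Prop := mink n n = 1.
Definition hline (R : realType) (n : mpt R) : set (mpt R) :=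
  [set p | onH p /\ mink n p = 0].

(* Closed quadrant determined by the lines with normals n1, n2 (the side
   where both forms are >= 0); replacing n1, n2 by -n1, -n2 gives the
   opposite quadrant. *)
Definition quadrant (R : realType) (n1 n2 : mpt R) : set (mpt R) :=
  [set p | onH p /\ 0 <= mink n1 p /\ 0 <= mink n2 p].

Definition mscale (R : realType) (a : R) (u : mpt R) : mpt R :=
  (a * u.1.1, a * u.1.2, a * u.2).
Definition madd (R : realType) (u v : mpt R) : mpt R :=
  (u.1.1 + v.1.1, u.1.2 + v.1.2, u.2 + v.2).
Definition mneg (R : realType) (u : mpt R) : mpt R := mscale (-1) u.

(* Geodesic segment [p,q]: points of H that are nonnegative combinations
   of p and q (the arc of H cut out by the plane span{p,q} between p, q). *)
Definition geod_seg (R : realType) (p q : mpt R) : set (mpt R) :=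
  [set z | onH z /\ exists a b : R, 0 <= a /\ 0 <= b /\
                                     z = madd (mscale a p) (mscale b q)].

(* Main.v *)
Require Import Defs.
From HB Require Import structures.
From mathcomp Require Import all_boot all_order all_algebra.
From mathcomp Require Import all_classical all_reals all_analysis.
From mathcomp Require Import ring lra.
Import Order.TTheory GRing.Theory Num.Theory.
Set Implicit Arguments. Unset Strict Implicit.
Local Open Scope ring_scope.

Definition m3 (R : realType) (f : nat -> nat -> R) : 'M[R]_3 :=
  \matrix_(i < 3, j < 3) f i j.

Lemma m3_mul (R : realType) (f g : nat -> nat -> R) (i j : 'I_3) :
  (m3 f *m m3 g) i j = f i 0%N * g 0%N j + f i 1%N * g 1%N j + f i 2%N * g 2%N j.
Proof.
rewrite !mxE !big_ord_recr big_ord0 /= !mxE /=; ring.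
Qed.

Definition sel (R : Type) (u : R * R * R) (k : nat) : R :=
  match k with 0 => u.1.1 | 1 => u.1.2 | _ => u.2 end.

Lemma parseval (R : realType) (x n1 n2 u v : mpt R) :
  mink x x = -1 -> mink n1 n1 = 1 -> mink n2 n2 = 1 ->
  mink x n1 = 0 -> mink x n2 = 0 -> mink n1 n2 = 0 ->
  mink u v = - mink x u * mink x v + mink n1 u * mink n1 v + mink n2 u * mink n2 v.
Proof.
case: x => [[x1 x2] x3]; case: n1 => [[a1 a2] a3]; case: n2 => [[b1 b2] b3].
case: u => [[u1 u2] u3]; case: v => [[v1 v2] v3].
rewrite /mink /= => hxx haa hbb hxa hxb hab.
pose M (i k : nat) := sel (match i with 0 => (x1,x2,x3) | 1 => (a1,a2,a3) | _ => (b1,b2,b3) end) k.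
pose G (k : nat) : R := if k == 2%N then -1 else 1.
pose E (k : nat) : R := if k == 0%N then -1 else 1.
pose A := m3 (fun i k => M i k * G k).
pose B := m3 (fun k j => M j k * E j).
have AB : A *m B = 1%:M.
  apply/matrixP => i j; rewrite m3_mul !mxE.
  case: i => [[|[|[|i]]] Hi] //; case: j => [[|[|[|j]]] Hj] //=;
  rewrite /M /G /E /=; lra.
have BA := mulmx1C AB.
have e : forall i j : 'I_3, (B *m A) i j = (i == j)%:R.
  by move=> i j; rewrite BA mxE.
have e00 := e ord0 ord0. have e01 := e ord0 (lift ord0 ord0).
have e02 := e ord0 ord_max. have e11 := e (lift ord0 ord0) (lift ord0 ord0).
have e12 := e (lift ord0 ord0) ord_max. have e22 := e ord_max ord_max.
rewrite !m3_mul /M /G /E /= in e00 e01 e02 e11 e12 e22.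
have k11 : -(x1*x1) + a1*a1 + b1*b1 = 1 by lra.
have k12 : -(x1*x2) + a1*a2 + b1*b2 = 0 by lra.
have k13 : -(x1*x3) + a1*a3 + b1*b3 = 0 by lra.
have k22 : -(x2*x2) + a2*a2 + b2*b2 = 1 by lra.
have k23 : -(x2*x3) + a2*a3 + b2*b3 = 0 by lra.
have k33 : -(x3*x3) + a3*a3 + b3*b3 = -1 by lra.
have -> : - (x1 * u1 + x2 * u2 - x3 * u3) * (x1 * v1 + x2 * v2 - x3 * v3) +
  (a1 * u1 + a2 * u2 - a3 * u3) * (a1 * v1 + a2 * v2 - a3 * v3) +
  (b1 * u1 + b2 * u2 - b3 * u3) * (b1 * v1 + b2 * v2 - b3 * v3) =
  u1*v1*(-(x1*x1) + a1*a1 + b1*b1) + (u1*v2+u2*v1)*(-(x1*x2) + a1*a2 + b1*b2)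
  - (u1*v3+u3*v1)*(-(x1*x3) + a1*a3 + b1*b3) + u2*v2*(-(x2*x2) + a2*a2 + b2*b2)
  - (u2*v3+u3*v2)*(-(x2*x3) + a2*a3 + b2*b3) + u3*v3*(-(x3*x3) + a3*a3 + b3*b3) by ring.
rewrite k11 k12 k13 k22 k23 k33; ring.
Qed.

Lemma mink_lin (R : realType) (u p q : mpt R) (al be : R) :
  mink u (madd (Defs.mscale al p) (Defs.mscale be q)) = al * mink u p + be * mink u q.
Proof. rewrite /mink /madd /Defs.mscale /=; ring. Qed.

Lemma mink_neg (R : realType) (n q : mpt R) : mink (mneg n) q = - mink n q.
Proof. rewrite /mink /mneg /Defs.mscale /=; ring. Qed.

Lemma sheet (R : realType) (x p : mpt R) : onH x -> onH p -> 0 < - mink x p.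
Proof.
case: x => [[x1 x2] x3]; case: p => [[p1 p2] p3].
rewrite /onH /mink /= => -[hx x3p] [hp p3p].
set s := x1 * p1 + x2 * p2.
have h1 : s ^+ 2 < (x3 * p3) ^+ 2.
  have -> : (x3 * p3) ^+ 2 = (1 + x1 * x1 + x2 * x2) * (1 + p1 * p1 + p2 * p2).
    by rewrite exprMn !expr2; congr (_ * _); lra.
  have : 0 <= (x1 * p2 - x2 * p1) ^+ 2 by apply: sqr_ge0.
  rewrite /s; nra.
have h2 : 0 < x3 * p3 by apply: mulr_gt0.
suff : s < x3 * p3 by rewrite /s; lra.
case: (lerP s 0) => hs; first lra.
move: h1; rewrite !expr2; nra.
Qed.

Lemma arcosh_bound (R : realType) (t : R) :
  0 < t -> t ^+ 2 <= 2 -> arcosh t <= ln (1 + Num.sqrt 2).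
Proof.
move=> t0 t2; rewrite /arcosh.
have s0 := sqrtr_ge0 (t ^+ 2 - 1).
have s20 := sqrtr_ge0 (2 : R).
rewrite ler_ln ?posrE; [| lra | lra].
have ht : t <= Num.sqrt 2.
  have : Num.sqrt (t ^+ 2) <= Num.sqrt 2 by rewrite ler_sqrt.
  by rewrite sqrtr_sqr ger0_norm // ltW.
have h1 : Num.sqrt (t ^+ 2 - 1) <= 1.
  by rewrite -{2}sqrtr1 ler_sqrt //; lra.
lra.
Qed.

Lemma mink_sym (R : realType) (u v : mpt R) : mink u v = mink v u.
Proof. rewrite /mink; ring. Qed.

Lemma sq_le (R : realType) (x y : R) : 0 <= y -> x ^+ 2 <= y ^+ 2 -> x <= y.
Proof. move=> y0; rewrite !expr2 => h; case: (lerP x y) => // hxy; nra. Qed.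

Lemma ineq (R : realType) (a c b1 b2 e1 e2 al be : R) :
  0 < a -> 0 < c -> 0 <= b1 -> 0 <= b2 -> e1 <= 0 -> e2 <= 0 ->
  a ^+ 2 = 1 + b1 ^+ 2 + b2 ^+ 2 -> c ^+ 2 = 1 + e1 ^+ 2 + e2 ^+ 2 ->
  al = - (e1 + e2) -> be = b1 + b2 ->
  2 * ((al * b1 + be * e1) ^+ 2 + (al * b2 + be * e2) ^+ 2)
    <= (al * a + be * c) ^+ 2.
Proof.
move=> a0 c0 b10 b20 e10 e20 ha hc hal hbe.
have sb1 := sqr_ge0 b1. have sb2 := sqr_ge0 b2. have se1 := sqr_ge0 e1. have se2 := sqr_ge0 e2.
have hb1 : b1 <= a by apply: sq_le; lra.
have hb2 : b2 <= a by apply: sq_le; lra.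
have he1 : - e1 <= c by apply: sq_le; rewrite ?sqrrN; lra.
have he2 : - e2 <= c by apply: sq_le; rewrite ?sqrrN; lra.
have al0 : 0 <= al by lra.
have be0 : 0 <= be by lra.
set U := al * b1 + be * e1.
have hV : al * b2 + be * e2 = - U by rewrite /U hal hbe; ring.
rewrite hV sqrrN.
have u1 : U <= al * a.
  have : be * e1 <= 0 by rewrite mulr_ge0_le0.
  have : al * b1 <= al * a by rewrite ler_wpM2l.
  rewrite /U; lra.
have u2 : U <= be * c.
  have : U = be * (- e2) - al * b2 by rewrite /U hal hbe; ring.
  have : 0 <= al * b2 by rewrite mulr_ge0.
  have : be * (- e2) <= be * c by rewrite ler_wpM2l.
  lra.
have u3 : - U <= al * a.
  have : - U = al * b2 + be * e2 by rewrite hV.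
  have : be * e2 <= 0 by rewrite mulr_ge0_le0.
  have : al * b2 <= al * a by rewrite ler_wpM2l.
  lra.
have u4 : - U <= be * c.
  have : - U = be * (- e1) - al * b1 by rewrite /U; ring.
  have : 0 <= al * b1 by rewrite mulr_ge0.
  have : be * (- e1) <= be * c by rewrite ler_wpM2l.
  lra.
set T := al * a + be * c.
have : 0 <= (T - 2 * U) * (T + 2 * U) by rewrite mulr_ge0 // /T; lra.
rewrite !expr2; nra.
Qed.

Lemma finish (R : realType) (x n1 n2 p q : mpt R) (al be : R) :
  onH x -> unit_normal n1 -> unit_normal n2 -> hline n1 x -> hline n2 x ->
  mink n1 n2 = 0 -> onH p -> onH q ->
  0 <= al -> 0 <= be -> 0 < al + be ->
  2 * ((al * mink n1 p + be * mink n1 q) ^+ 2 + (al * mink n2 p + be * mink n2 q) ^+ 2)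
    <= (al * (- mink x p) + be * (- mink x q)) ^+ 2 ->
  exists z, geod_seg p q z /\ hdist x z <= ln (1 + Num.sqrt 2).
Proof.
move=> hx hn1 hn2 [_ hl1] [_ hl2] h12 hp hq al0 be0 albe.
set T := al * (- mink x p) + be * (- mink x q).
set U := al * mink n1 p + be * mink n1 q.
set V := al * mink n2 p + be * mink n2 q.
move=> hTUV.
have a0 := sheet hx hp. have c0 := sheet hx hq.
have T0 : 0 < T.
  rewrite /T; have [al_0|alne] := eqVneq al 0.
    by rewrite al_0 in albe *; rewrite mul0r add0r mulr_gt0 //; lra.
  have : 0 < al * (- mink x p) by rewrite mulr_gt0 // lt_def alne.
  have : 0 <= be * (- mink x q) by rewrite mulr_ge0 // ltW.
  lra.
have sU := sqr_ge0 U. have sV := sqr_ge0 V.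
have sT : 0 < T ^+ 2 by rewrite exprn_gt0.
have D0 : 0 < T ^+ 2 - U ^+ 2 - V ^+ 2 by lra.
set N := Num.sqrt (T ^+ 2 - U ^+ 2 - V ^+ 2).
have hN2 : N ^+ 2 = T ^+ 2 - U ^+ 2 - V ^+ 2 by rewrite sqr_sqrtr // ltW.
have N0 : 0 < N by rewrite sqrtr_gt0.
have Nn0 : N != 0 by rewrite gt_eqF.
have hxx : mink x x = -1 by case: hx.
have hxn1 : mink x n1 = 0 by rewrite mink_sym.
have hxn2 : mink x n2 = 0 by rewrite mink_sym.
pose z := madd (Defs.mscale (al / N) p) (Defs.mscale (be / N) q).
have zx : mink x z = - (T / N) by rewrite /z mink_lin /T; field.
have zn1 : mink n1 z = U / N by rewrite /z mink_lin /U; field.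
have zn2 : mink n2 z = V / N by rewrite /z mink_lin /V; field.
exists z; split.
  split; last first.
    by exists (al / N), (be / N); rewrite !divr_ge0 // ltW.
  split.
    rewrite (parseval z z hxx hn1 hn2 hxn1 hxn2 h12) zx zn1 zn2.
    have -> : - (- (T / N)) * - (T / N) + U / N * (U / N) + V / N * (V / N)
      = - (T ^+ 2 - U ^+ 2 - V ^+ 2) / N ^+ 2 by field.
    by rewrite -hN2 mulNr divff // expf_neq0.
  rewrite /z /madd /Defs.mscale /=.
  case: hp => _ p2; case: hq => _ q2.
  have [al_0|alne] := eqVneq al 0.
    by rewrite al_0 in albe *; rewrite mul0r mul0r add0r mulr_gt0 // divr_gt0 //; lra.
  have : 0 < al / N * p.2 by rewrite mulr_gt0 // divr_gt0 // lt_def alne.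
  have : 0 <= be / N * q.2 by rewrite mulr_ge0 // ?divr_ge0 // ltW.
  lra.
rewrite /hdist zx opprK; apply: arcosh_bound; first by rewrite divr_gt0.
rewrite expr_div_n ler_pdivrMr ?exprn_gt0 // hN2; lra.
Qed.

Theorem lemma9 (R : realType) (x n1 n2 : mpt R) :
  onH x ->
  unit_normal n1 -> unit_normal n2 ->
  hline n1 x -> hline n2 x ->
  mink n1 n2 = 0 ->
  forall p q : mpt R,
    quadrant n1 n2 p -> quadrant (mneg n1) (mneg n2) q ->
    exists z, geod_seg p q z /\ hdist x z <= ln (1 + Num.sqrt 2).
Proof.
move=> hx hn1 hn2 hl1 hl2 h12 p q [hp [b10 b20]] [hq []].
rewrite !mink_neg !oppr_ge0 => e10 e20.
have hxx : mink x x = -1 by case: hx.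
have hxn1 : mink x n1 = 0 by rewrite mink_sym; case: hl1.
have hxn2 : mink x n2 = 0 by rewrite mink_sym; case: hl2.
have a0 := sheet hx hp. have c0 := sheet hx hq.
have pp := parseval p p hxx hn1 hn2 hxn1 hxn2 h12.
have qq := parseval q q hxx hn1 hn2 hxn1 hxn2 h12.
have hpp : mink p p = -1 by case: hp.
have hqq : mink q q = -1 by case: hq.
have ha : (- mink x p) ^+ 2 = 1 + mink n1 p ^+ 2 + mink n2 p ^+ 2.
  by rewrite sqrrN !expr2; lra.
have hc : (- mink x q) ^+ 2 = 1 + mink n1 q ^+ 2 + mink n2 q ^+ 2.
  by rewrite sqrrN !expr2; lra.
have [hz|hnz] := eqVneq (mink n1 p + mink n2 p - mink n1 q - mink n2 q) 0.
  apply: (@finish _ x n1 n2 p q 1 0) => //; try lra.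
  have -> : mink n1 p = 0 by lra.
  have -> : mink n2 p = 0 by lra.
  rewrite !mul0r !mul1r !addr0.
  by rewrite expr0n /= addr0 mulr0 sqr_ge0.
apply: (@finish _ x n1 n2 p q (- (mink n1 q + mink n2 q)) (mink n1 p + mink n2 p)) => //; try lra.
by apply: ineq.
Qed.
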